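(* Let $n\ge2$ and $T=\alpha_0I+\alpha_1D+\cdots+\alpha_nD^n\in\mathcal L(\mathcal P_n)$ with $\alpha_0\ne0$. For every $f\in\mathcal P_n$ of degree at least $2$ with simple roots, $$\lim_{t\to+\infty}d_F\Bigl(Z\bigl(S(\alpha_1/\alpha_0)H(t)f\bigr),\,Z\bigl(TH(t)f\bigr)\Bigr)=0.$$
   Context: $\mathcal P_n$ is the complex vector space of polynomials of degree at most $n$, $D$ differentiation, $I$ identity. For $\beta\in\mathbb C$, $(S(\beta)f)(z)=f(\beta+z)$; for $t>0$, $(H(t)f)(z)=f(z/t)$. $Z(f)$ denotes the roots of $f$ counted with multiplicity. For multisets $A=\{u_1,\dots,u_m\}$, $B=\{v_1,\dots,v_m\}$ in $\mathbb C$, $d_F(A,B)=\min_{\sigma}\max_k|u_k-v_{\sigma(k)}|$ over permutations $\sigma$ of $\{1,\dots,m\}$. *)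

(* Defs.v *)
From HB Require Import structures.
From mathcomp Require Import all_boot all_order all_fingroup all_algebra.
Set Implicit Arguments. Unset Strict Implicit. Unset Printing Implicit Defensive.
Import Order.TTheory GRing.Theory Num.Theory.
Local Open Scope ring_scope.

Section Defs.
Variable C : numClosedFieldType.

(* Z(f): the roots of f counted with multiplicity, as a sequence (order irrelevant):
   f = lead_coef f *: \prod_(z <- Zroots f) ('X - z%:P). *)
Definition Zroots (f : {poly C}) : seq C := sval (closed_field_poly_normal f).

Definition maxdev (A B : seq C) (s : 'S_(size A)) : C :=
  \big[Num.max/0]_(k < size A) `|A`_k - B`_(s k)|.
Arguments maxdev : clear implicits.
Definition dF (A B : seq C) : C :=
  \big[Num.min/maxdev A B 1%g]_(s : 'S_(size A)) maxdev A B s.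

Definition Sop (beta : C) (f : {poly C}) : {poly C} := f \Po ('X + beta%:P).
Definition Hop (t : C) (f : {poly C}) : {poly C} := f \Po ('X * (t^-1)%:P).
Definition Top (n : nat) (alpha : nat -> C) (f : {poly C}) : {poly C} :=
  \sum_(i < n.+1) alpha i *: f^`(i).
End Defs.

(* Main.v *)
Require Import Defs.
From HB Require Import structures.
From mathcomp Require Import all_boot all_order all_fingroup all_algebra.
Import Order.TTheory GRing.Theory Num.Theory.
Local Open Scope ring_scope.
Set Implicit Arguments. Unset Strict Implicit.
Section Helpers.
Variable C : numClosedFieldType.

Lemma max_lt (x y e : C) : x < e -> y < e -> Num.max x y < e.
Proof. rewrite /Num.max /Order.max. case: ifP => //. Qed.
Lemma min_le (x y : C) : x \is Num.real -> y \is Num.real -> Num.min x y <= x.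
Proof. move=> hx hy; rewrite /Num.min /Order.min. case: ifP => //.
move/negbT; rewrite real_ltNge // negbK //. Qed.
Lemma min_real (x y : C) : x \is Num.real -> y \is Num.real -> Num.min x y \is Num.real.
Proof. move=> hx hy; rewrite /Num.min /Order.min. by case: ifP. Qed.

Lemma maxdev_real (A B : seq C) s : @maxdev C A B s \is Num.real.
Proof.
rewrite /maxdev; elim/big_ind: _ => //.
  by move=> x y hx hy; rewrite /Num.max /Order.max; case: ifP.
by move=> i _; rewrite normr_real.
Qed.

Lemma min_le_r (x y : C) : x \is Num.real -> y \is Num.real -> Num.min x y <= y.
Proof. move=> hx hy; rewrite /Num.min /Order.min. case: ifP => // /ltW //. Qed.

Lemma bigmin_le_seq (I : eqType) (r : seq I) (F : I -> C) x0 j :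
  x0 \is Num.real -> (forall i, F i \is Num.real) -> j \in r ->
  \big[Num.min/x0]_(i <- r) F i <= F j.
Proof.
move=> hx hF; have hR : forall r', \big[Num.min/x0]_(i <- r') F i \is Num.real.
  by move=> r'; elim/big_ind: _ => // x y *; apply: min_real.
elim: r => // a r IH; rewrite inE big_cons; case/orP.
  by move/eqP->; apply: min_le.
by move/IH => h; apply: le_trans h; apply: min_le_r.
Qed.

Lemma dF_le (A B : seq C) s : dF A B <= @maxdev C A B s.
Proof.
apply: bigmin_le_seq; [exact: maxdev_real| move=> *; exact: maxdev_real|].
exact: mem_index_enum.
Qed.

Lemma dF_lt_perm (A B : seq C) (e : C) (s : 'S_(size A)) : 0 < e ->
  (forall i : 'I_(size A), `|A`_i - B`_(s i)| < e) -> dF A B < e.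
Proof.
move=> he H; apply: (le_lt_trans (dF_le B s)).
rewrite /maxdev; elim/big_ind: _ => //; first by move=> *; apply: max_lt.
Qed.

Lemma dF_lt (A B : seq C) (m : nat) (e : C) (hA : size A = m)
  (fA fB : 'I_m -> 'I_m) : 0 < e -> injective fA -> injective fB ->
  (forall k, `|A`_(fA k) - B`_(fB k)| < e) -> dF A B < e.
Proof.
move=> he iA iB H.
pose p := perm iA.
pose g (i : 'I_(size A)) : 'I_(size A) :=
   cast_ord (esym hA) (fB ((p^-1)%g (cast_ord hA i))).
have ig : injective g.
  move=> i j /(congr1 (cast_ord hA)); rewrite !cast_ordKV => /iB.
  by move/(congr1 p); rewrite !permKV => /(congr1 (cast_ord (esym hA))); rewrite !cast_ordK.
apply: (@dF_lt_perm _ _ _ (perm ig)) => // i.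
rewrite permE /g /=.
have -> : (i : nat) = fA ((p^-1)%g (cast_ord hA i)).
  by rewrite -(permE iA) -/p permKV.
exact: H.
Qed.


Lemma Zroots_spec (p : {poly C}) : p != 0 ->
  [/\ size (Zroots p) = (size p).-1,
      (forall x, p.[x] = lead_coef p * \prod_(y <- Zroots p) (x - y)) &
      (forall x, root p x = (x \in Zroots p))].
Proof.
move=> nz; have E : p = lead_coef p *: \prod_(z <- Zroots p) ('X - z%:P).
  by rewrite /Zroots; case: (closed_field_poly_normal p).
have lc0 : lead_coef p != 0 by rewrite lead_coef_eq0.
split.
- by rewrite {2}E size_scale // size_prod_XsubC.
- by move=> x; rewrite {1}E hornerZ horner_prod; congr (_ * _); apply: eq_bigr => y _; rewrite hornerXsubC.
- by move=> x; rewrite {1}E rootZ // root_prod_XsubC.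
Qed.

Lemma size_deriv_le (p : {poly C}) : (size p^`() <= (size p).-1)%N.
Proof.
have [->|nz] := eqVneq p 0; first by rewrite deriv0 size_poly0.
by rewrite -ltnS prednK ?size_poly_gt0 // lt_size_deriv.
Qed.

Lemma size_derivnS_le (p : {poly C}) i : (size p^`(i.+1) <= (size p).-1)%N.
Proof.
elim: i => [|i IH]; first exact: size_deriv_le.
rewrite derivnS; apply: leq_trans (size_deriv_le _) _.
by apply: leq_trans (leq_pred _) IH.
Qed.

Lemma Top_size_lead n (alpha : nat -> C) (h : {poly C}) : h != 0 -> alpha 0%N != 0 ->
  size (Top n alpha h) = size h /\ lead_coef (Top n alpha h) = alpha 0%N * lead_coef h.
Proof.
move=> hnz a0; rewrite /Top big_ord_recl /=.
set S := \sum_(i < n) _.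
have hs : (size S < size (alpha 0%N *: h))%N.
  have hp : (0 < size h)%N by rewrite size_poly_gt0.
  rewrite size_scale // -(prednK hp) ltnS.
  rewrite /S; elim/big_ind: _ => //; first by rewrite size_poly0.
    by move=> x y hx hy; apply: leq_trans (size_polyD _ _) _; rewrite geq_max hx hy.
  move=> i _; apply: leq_trans (size_scale_leq _ _) _; rewrite -derivnS; exact: size_derivnS_le.
split; first by rewrite size_polyDl // size_scale.
by rewrite lead_coefDl // lead_coefZ.
Qed.





Lemma Sop_Hop_eval (f : {poly C}) (b t w : C) :
  (Sop b (Hop t f)).[w] = f.[(w + b) / t].
Proof. by rewrite /Sop /Hop !horner_comp hornerM !hornerD !hornerX !hornerC. Qed.



Lemma nlt_le (x y : C) : x \is Num.real -> y \is Num.real -> ~~ (x < y) -> y <= x.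
Proof. by move=> hx hy; rewrite real_leNgt. Qed.

Lemma prod_lower (m : nat) (j : 'I_m) (F : 'I_m -> C) r : 0 <= r ->
  (forall i, i != j -> r <= F i) -> r ^+ m.-1 <= \prod_(i < m | i != j) F i.
Proof.
move=> r0 H.
have -> : r ^+ m.-1 = \prod_(i < m | i != j) r by rewrite prodr_const cardC1 card_ord.
by apply: ler_prod => i /H ->; rewrite r0.
Qed.

Lemma localize (m : nat) (a v : 'I_m -> C) (c d eta e : C) :
  0 < d -> 0 < e ->
  (forall j k, j != k -> d <= `|a j - a k|) ->
  (forall k, `|c| * \prod_(i < m) `|a k - v i| <= eta) ->
  eta < `|c| * (d / 3%:R) ^+ m ->
  eta < `|c| * (d / 3%:R) ^+ m.-1 * e ->
  exists fB : 'I_m -> 'I_m, injective fB /\ forall k, `|a k - v (fB k)| < e.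
Proof.
move=> d0 e0 dis Hp H1 H2.
set r := d / 3%:R.
have r0 : 0 < r by rewrite divr_gt0 // ltr0n.
have r3 : r *+ 3 = d by rewrite -mulr_natr mulfVK // pnatr_eq0.
have rr : r + r < d by rewrite -r3 !mulrS mulr0n addr0 addrA ltrDl.
have rR : r \is Num.real by rewrite gtr0_real.
have ex : forall k, exists i, `|a k - v i| < r.
  move=> k; case: (boolP [exists i, `|a k - v i| < r]) => [/existsP //|/existsPn H].
  exfalso; have : `|c| * r ^+ m <= eta.
    apply: le_trans (Hp k); apply: (ler_wpM2l (normr_ge0 c)).
    rewrite -[X in r ^+ X]card_ord -prodr_const; apply: ler_prod => i _.
    by rewrite (ltW r0) /=; apply: nlt_le; [exact: normr_real | exact: rR | exact: H].
  by move/le_lt_trans/(_ H1); rewrite ltxx.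
have [fB HB] := fin_all_exists ex.
have iB : injective fB.
  move=> j k E; apply/eqP; apply: contraT => njk.
  have := dis j k njk.
  have : `|a j - a k| < r + r.
    apply: le_lt_trans (ler_distD (v (fB j)) _ _) _; apply: ltrD => //.
    by rewrite E distrC.
  move=> h1 h2; have := lt_le_trans (lt_trans h1 rr) h2; by rewrite ltxx.
exists fB; split => // k.
pose p := perm iB.
have far : forall i, i != fB k -> r <= `|a k - v i|.
  move=> i ni; have ei : fB ((p^-1)%g i) = i by rewrite -(permE iB) -/p permKV.
  have njk : (p^-1)%g i != k by apply: contra ni => /eqP <-; rewrite ei.
  have := dis _ _ njk; rewrite distrC.
  move/le_trans/(_ (ler_distD (v i) _ _)); rewrite -{2}ei => h.
  apply: nlt_le; [exact: normr_real | exact: rR |]; apply/negP => hlt.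
  rewrite [X in _ + X]distrC in h.
  have := le_lt_trans h (ltrD hlt (HB _)).
  by move/lt_trans/(_ rr); rewrite ltxx.
apply: contraTT H2 => /(nlt_le (normr_real _) (gtr0_real e0)) he.
have etaR : eta \is Num.real.
  by apply: ger0_real; apply: le_trans (Hp k); rewrite mulr_ge0 // prodr_ge0.
have rhsR : `|c| * r ^+ m.-1 * e \is Num.real.
  by apply: ger0_real; rewrite !mulr_ge0 // ?exprn_ge0 // ltW.
rewrite -real_leNgt //; apply: le_trans (Hp k).
rewrite (bigD1 (fB k)) //= -mulrA; apply: (ler_wpM2l (normr_ge0 c)).
rewrite mulrC; apply: ler_pM => //.
  by rewrite ltW.
  by rewrite exprn_ge0 // ltW.
exact: prod_lower (ltW r0) far.
Qed.


Lemma sum_bound (N : nat) (c : nat -> C) (t : C) : 1 <= t -> c 0%N = 0 -> c 1%N = 0 ->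
  `|\sum_(i < N) c i / t ^+ i| <= (\sum_(i < N) `|c i|) / t ^+ 2.
Proof.
move=> t1 c0 c1; have t0 : 0 < t by apply: lt_le_trans t1.
apply: (le_trans (ler_norm_sum _ _ _)); rewrite mulr_suml; apply: ler_sum => i _.
case: i => [i Hi] /=; case: i Hi => [|[|i]] Hi; first by rewrite c0 !(normr0, mul0r).
  by rewrite c1 !(normr0, mul0r).
rewrite normrM normfV normrX (ger0_norm (ltW t0)); apply: ler_wpM2l => //.
rewrite lef_pV2 ?posrE ?exprn_gt0 //; apply: ler_weXn2l => //.
Qed.

Lemma horner_bound (p : {poly C}) x R : `|x| <= R ->
  `|p.[x]| <= \sum_(i < size p) `|p`_i| * R ^+ i.
Proof.
move=> hx; rewrite horner_coef; apply: (le_trans (ler_norm_sum _ _ _)).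
apply: ler_sum => i _; rewrite normrM normrX; apply: ler_wpM2l => //.
by apply: lerXn2r => //; rewrite nnegrE // (le_trans _ hx).
Qed.
Lemma derivn_Hop (f : {poly C}) c i :
  (f \Po ('X * c%:P))^`(i) = c ^+ i *: (f^`(i) \Po ('X * c%:P)).
Proof.
elim: i => [|i IH]; first by rewrite !derivn0 expr0 scale1r.
rewrite derivnS IH derivZ deriv_comp.
have -> : ('X * c%:P)^`() = c%:P by rewrite mulrC mul_polyC derivZ derivX alg_polyC.
by rewrite mulrC mul_polyC scalerA -exprSr derivnS.
Qed.

Lemma Top_Hop_eval n (alpha : nat -> C) (f : {poly C}) (t u : C) : t != 0 ->
  (Top n alpha (Hop t f)).[t * u] = \sum_(i < n.+1) (alpha i * (f^`(i)).[u]) / t ^+ i.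
Proof.
move=> t0; rewrite /Top /Hop horner_sum; apply: eq_bigr => i _.
rewrite hornerZ derivn_Hop hornerZ horner_comp hornerM hornerX hornerC.
by rewrite [t * u]mulrC mulfK // exprVn mulrCA mulrC.
Qed.

Definition hb (p : {poly C}) R := \sum_(j < size p) `|p`_j| * R ^+ j.

Lemma E2 (n : nat) (alpha : nat -> C) (f : {poly C}) (z t R : C) :
  (size f <= n.+1)%N -> alpha 0%N != 0 -> root f z -> 1 <= t ->
  `|z| + `|alpha 1%N / alpha 0%N| <= R ->
  `|(Top n alpha (Hop t f)).[t * (z - (alpha 1%N / alpha 0%N) / t)]| <=
    (\sum_(i < n.+1) (`|alpha i| * hb (f^`(i)) R +
        `|alpha 0%N| * `|alpha 1%N / alpha 0%N| ^+ i * hb (f^`N(i)) R)) / t ^+ 2.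
Proof.
move=> hs a0 rz t1 hR.
set b := alpha 1%N / alpha 0%N; set a := z - b / t.
have tp : 0 < t by apply: lt_le_trans t1.
have t0 : t != 0 by rewrite gt_eqF.
rewrite Top_Hop_eval //.
have HT : \sum_(i < n.+1) (alpha 0%N * (b ^+ i * f^`N(i).[a])) / t ^+ i = 0.
  have : f.[a + b / t] = 0 by rewrite /a subrK; apply/eqP.
  rewrite (nderiv_taylor_wide (mulrC _ _) hs) => HS.
  transitivity (alpha 0%N * \sum_(i < n.+1) f^`N(i).[a] * (b / t) ^+ i); last by rewrite HS mulr0.
  rewrite mulr_sumr; apply: eq_bigr => i _.
  by rewrite [(b / t) ^+ i]expr_div_n !mulrA [alpha 0%N * _ * b ^+ i]mulrAC.
rewrite -[X in `|X|]subr0 -[X in `|_ - X|]HT -sumrB.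
under eq_bigr do rewrite -mulrBl.
apply: le_trans (sum_bound n.+1 (c := fun i : nat => alpha i * f^`(i).[a] - alpha 0%N * (b ^+ i * f^`N(i).[a])) t1 _ _) _.
- by rewrite derivn0 nderivn0 expr0 mul1r subrr.
- by rewrite derivn1 nderivn1 expr1 mulrA [alpha 0%N * _]mulrC divfK // subrr.
apply: ler_wpM2r; first by rewrite invr_ge0 exprn_ge0 // ltW.
apply: ler_sum => i _; apply: le_trans (ler_normB _ _) _.
have ha : `|a| <= R.
  apply: le_trans (ler_normB _ _) _; apply: le_trans hR; rewrite lerD2l.
  rewrite normrM normfV (ger0_norm (ltW tp)) ler_pdivrMr // ler_peMr //.
apply: lerD.
  by rewrite normrM; apply: (ler_wpM2l (normr_ge0 _)); apply: horner_bound.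
rewrite normrM normrM normrX mulrA; apply: (ler_wpM2l (mulr_ge0 (normr_ge0 _) (exprn_ge0 _ (normr_ge0 _)))).
exact: horner_bound.
Qed.

Lemma sep (m : nat) (z : 'I_m -> C) : injective z ->
  exists d, 0 < d /\ forall j k, j != k -> d <= `|z j - z k|.
Proof.
move=> iz.
pose S := \sum_(p : 'I_m * 'I_m | p.1 != p.2) `|z p.1 - z p.2|^-1.
have S0 : 0 <= S by apply: sumr_ge0 => p _; rewrite invr_ge0.
exists (1 + S)^-1; split; first by rewrite invr_gt0 ltr_wpDr.
move=> j k njk.
have nz : 0 < `|z j - z k| by rewrite normr_gt0 subr_eq0; apply: contra njk => /eqP/iz ->.
rewrite -[X in _ <= X]invrK lef_pV2 ?posrE ?invr_gt0 ?ltr_wpDr //.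
apply: le_trans (ler_wpDl ler01 (lexx _)).
rewrite /S (bigD1 (j, k)) //= lerDl; apply: sumr_ge0 => p _; by rewrite invr_ge0 normr_ge0.
Qed.
End Helpers.

Theorem corollary4p5 (C : numClosedFieldType) (n : nat) (alpha : nat -> C)
    (f : {poly C}) :
  (2 <= n)%N -> alpha 0%N != 0 ->
  (size f <= n.+1)%N -> (2 < size f)%N -> uniq (Zroots f) ->
  forall eps : C, 0 < eps ->
    exists M : C, 0 < M /\
      forall t : C, M < t ->
        dF (Zroots (Sop (alpha 1%N / alpha 0%N) (Hop t f)))
           (Zroots (Top n alpha (Hop t f))) < eps.
Proof.
move=> hn a0 hsz hs2 huniq eps heps.
have fnz : f != 0 by rewrite -size_poly_gt0 (ltn_trans _ hs2).
have [zs zev zroot] := Zroots_spec fnz.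
set z := Zroots f in zs zev zroot huniq.
set m := size z.
set b := alpha 1%N / alpha 0%N.
have iz : injective (fun k : 'I_m => z`_k).
  by move=> j k /eqP; rewrite nth_uniq // => /eqP; apply: val_inj.
have [d [d0 dsep]] := sep iz.
set R := \sum_(k < m) `|z`_k| + `|b|.
set K := \sum_(i < n.+1) (`|alpha i| * hb (f^`(i)) R +
        `|alpha 0%N| * `|b| ^+ i * hb (f^`N(i)) R).
have hb0 : forall p, 0 <= hb p R.
  move=> p; apply: sumr_ge0 => j _; rewrite mulr_ge0 // exprn_ge0 //.
  by rewrite addr_ge0 // sumr_ge0.
have K0 : 0 <= K.
  by apply: sumr_ge0 => i _; rewrite addr_ge0 // !mulr_ge0 // exprn_ge0.
set c := alpha 0%N * lead_coef f.
have c0 : 0 < `|c| by rewrite normr_gt0 mulf_neq0 // lead_coef_eq0.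
set r := d / 3%:R.
have r0 : 0 < r by rewrite divr_gt0 // ltr0n.
set X1 := `|c| * r ^+ m.
set X2 := `|c| * r ^+ m.-1 * eps.
have X10 : 0 < X1 by rewrite mulr_gt0 // exprn_gt0.
have X20 : 0 < X2 by rewrite !mulr_gt0 // exprn_gt0.
have p1 : 0 <= K / X1 by rewrite divr_ge0 // ltW.
have p2 : 0 <= K / X2 by rewrite divr_ge0 // ltW.
exists (1 + K / X1 + K / X2); split.
  by rewrite -addrA ltr_wpDr // addr_ge0.
move=> t Mt.
have t1 : 1 <= t.
  by apply: le_trans (ltW Mt); rewrite -addrA lerDl addr_ge0.
have tK1 : K / X1 < t.
  by apply: le_lt_trans Mt; rewrite ler_wpDr // ler_wpDl.
have tK2 : K / X2 < t.
  by apply: le_lt_trans Mt; rewrite ler_wpDl // addr_ge0.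
have tp : 0 < t by apply: lt_le_trans t1.
have t0 : t != 0 by rewrite gt_eqF.
set h := Hop t f.
have ti0 : t^-1 != 0 by rewrite invr_eq0.
have hsz' : size h = size f by rewrite /h /Hop size_comp_poly2 // size_XmulC.
have hnz : h != 0 by rewrite -size_poly_gt0 hsz' size_poly_gt0.
have lX : lead_coef ('X * (t^-1)%:P) = t^-1.
  by rewrite mulrC mul_polyC lead_coefZ lead_coefX mulr1.
have hlc : lead_coef h = lead_coef f * t^-1 ^+ m.
  by rewrite /h /Hop lead_coef_comp ?size_XmulC // lX -zs.
have [Psz Plc] := Top_size_lead n hnz a0.
set P := Top n alpha h in Psz Plc.
have Pnz : P != 0 by rewrite -size_poly_gt0 Psz hsz' size_poly_gt0.
have [Bs Bev _] := Zroots_spec Pnz.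
set B := Zroots P in Bs Bev.
have hB : size B = m by rewrite Bs Psz hsz' -zs.
set Q := Sop b h.
have Qsz : size Q = size f by rewrite /Q /Sop size_comp_poly2 ?size_XaddC.
have Qnz : Q != 0 by rewrite -size_poly_gt0 Qsz size_poly_gt0.
have [As _ Aroot] := Zroots_spec Qnz.
set A := Zroots Q in As Aroot.
have hA : size A = m by rewrite As Qsz -zs.
pose a := fun k : 'I_m => z`_k - b / t.
pose v := fun i : 'I_m => B`_i / t.
have Bv : forall i : 'I_m, B`_i = t * v i by move=> i; rewrite /v mulrCA divff // mulr1.
have prodrel : forall u, P.[t * u] = c * \prod_(i < m) (u - v i).
  move=> u; rewrite Bev Plc hlc (big_nth 0) hB big_mkord.
  under eq_bigr do rewrite Bv -mulrBr.
  rewrite big_split /= prodr_const card_ord exprVn.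
  by rewrite /c mulrA !mulrA divfK // expf_neq0.
have Hp : forall k, `|c| * \prod_(i < m) `|a k - v i| <= K / t ^+ 2.
  move=> k; rewrite -normr_prod -normrM -prodrel.
  apply: E2 => //; first by rewrite zroot mem_nth.
  by rewrite lerD2r /R (bigD1 k) //= ler_wpDr // sumr_ge0.
have et0 : 0 < eps / t by rewrite divr_gt0.
have H1 : K / t ^+ 2 < X1.
  apply: (@le_lt_trans _ _ (K / t)).
    apply: ler_wpM2l => //; rewrite lef_pV2 ?posrE ?exprn_gt0 //.
    by rewrite expr2 ler_peMl // ltW.
  by rewrite ltr_pdivrMr // mulrC -ltr_pdivrMr.
have H2 : K / t ^+ 2 < `|c| * (d / 3%:R) ^+ m.-1 * (eps / t).
  rewrite mulrA -/X2 expr2 invfM mulrA ltr_pM2r ?invr_gt0 //.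
  by rewrite ltr_pdivrMr // mulrC -ltr_pdivrMr.
have dis : forall j k, j != k -> d <= `|a j - a k|.
  by move=> j k njk; rewrite /a opprB addrA subrK; apply: dsep.
have [fB [iB HB]] := localize d0 et0 dis Hp H1 H2.
have exA : forall k : 'I_m, exists i : 'I_m, A`_i == t * a k.
  move=> k.
  have rt : root Q (t * a k).
    rewrite rootE /Q Sop_Hop_eval /a mulrBr [t * (b / t)]mulrCA divff // mulr1 subrK.
    by rewrite mulrC mulKf // -rootE zroot mem_nth.
  rewrite Aroot in rt.
  have hi : (index (t * a k)%R A < m)%N by rewrite -hA index_mem.
  by exists (Ordinal hi); rewrite /= nth_index.
have [fA HA] := fin_all_exists exA.
have iA : injective fA.
  move=> j k E; have : t * a j = t * a k by rewrite -(eqP (HA j)) E (eqP (HA k)).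
  move/(mulfI t0)/(congr1 (fun x => x + b / t)); rewrite /a !subrK.
  by move/iz.
apply: (dF_lt hA heps iA iB) => k.
rewrite (eqP (HA k)) Bv -mulrBr normrM (gtr0_norm tp).
by have := HB k; rewrite ltr_pdivlMr // mulrC.
Qed.
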